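(* For a real square matrix $A$, the following are equivalent: (i) $A$ is a WCDD Z-matrix with positive diagonal entries; (ii) $A$ is a WDD M-matrix.
   Context: For a complex $M\times M$ matrix $A=(a_{ij})$: row $i$ is strictly diagonally dominant (SDD) if $|a_{ii}|>\sum_{j\neq i}|a_{ij}|$, and weakly diagonally dominant (WDD) if $|a_{ii}|\geq\sum_{j\neq i}|a_{ij}|$; $A$ is SDD (resp. WDD) if all its rows are. The directed graph of $A$ has vertices $\{1,\dots,M\}$ and an edge $i\to j$ iff $a_{ij}\neq 0$; a path may be trivial (length zero). $A$ is WCDD if it is WDD and for each row $r$ there is a path in the graph of $A$ from $r$ to some SDD row. A real square matrix $A$ is monotone (in the sense of Collatz) if for every real vector $v$, $Av\geq 0$ (componentwise) implies $v\geq 0$. A Z-matrix is a real matrix with nonpositive off-diagonal entries. An M-matrix is a monotone Z-matrix. *)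

(* Defs.v *)
From HB Require Import structures.
From mathcomp Require Import all_boot all_order all_algebra.
Set Implicit Arguments. Unset Strict Implicit. Unset Printing Implicit Defensive.
Import Order.TTheory GRing.Theory Num.Theory.
Local Open Scope ring_scope.

Section Defs.
Variables (R : realFieldType) (n : nat).
Implicit Types (A : 'M[R]_n) (i : 'I_n).

Definition sdd_row A i : bool := \sum_(j < n | j != i) `|A i j| < `|A i i|.
Definition wdd_row A i : bool := \sum_(j < n | j != i) `|A i j| <= `|A i i|.

Definition WDD A : Prop := forall i, wdd_row A i.

Definition mx_edge A : rel 'I_n := fun i j => A i j != 0.

Definition WCDD A : Prop :=
  WDD A /\ forall r, exists2 j, connect (mx_edge A) r j & sdd_row A j.

Definition monotone A : Prop :=
  forall v : 'cV[R]_n, (forall i, 0 <= (A *m v) i 0) -> forall i, 0 <= v i 0.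

Definition Zmatrix A : Prop := forall i j, i != j -> A i j <= 0.

Definition Mmatrix A : Prop := Zmatrix A /\ monotone A.
End Defs.

(* Main.v *)
Require Import Defs.
From HB Require Import structures.
From mathcomp Require Import all_boot all_order all_algebra.
From mathcomp Require Import lra.
Import Order.TTheory GRing.Theory Num.Theory.
Local Open Scope ring_scope.

Lemma mulmx_row (R : realFieldType) (n : nat) (A : 'M[R]_n) (v : 'cV[R]_n) i :
  (A *m v) i 0 = A i i * v i 0 + \sum_(j < n | j != i) A i j * v j 0.
Proof. by rewrite mxE (bigD1 i). Qed.

Lemma key_row (R : realFieldType) (n : nat) (A : 'M[R]_n) (v : 'cV[R]_n) i m :
  Zmatrix A -> 0 < A i i -> wdd_row A i -> m < 0 -> v i 0 = m ->
  (forall j, m <= v j 0) -> 0 <= (A *m v) i 0 ->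
  ~~ sdd_row A i /\ (forall j, A i j != 0 -> v j 0 = m).
Proof.
move=> HZ Hd Hw Hm Hvi Hmin Hav.
rewrite mulmx_row Hvi in Hav.
set s := \sum_(j < n | j != i) `|A i j|.
set D := \sum_(j < n | j != i) (A i j * v j 0 - A i j * m).
have Hs : \sum_(j < n | j != i) A i j * v j 0 = - (m * s) + D.
  rewrite /D /s mulr_sumr -sumrN -big_split /=.
  apply: eq_bigr => j Hj; rewrite ler0_norm ?HZ // 1?eq_sym //.
  rewrite mulrN opprK; lra.
have HD : D <= 0.
  apply: sumr_le0 => j Hj; rewrite subr_le0; apply: ler_wnM2l; last exact: Hmin.
  by apply: HZ; rewrite eq_sym.
have Hw' : s <= A i i by move: Hw; rewrite /wdd_row gtr0_norm.
have HX : m * (A i i - s) <= 0 by apply: mulr_le0_ge0; [lra | lra].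
rewrite Hs in Hav.
have HX0 : m * (A i i - s) = 0 by lra.
have HD0 : D = 0 by lra.
split.
  move: HX0 => /eqP; rewrite mulf_eq0 (negbTE (ltr0_neq0 Hm)) /= subr_eq0 => /eqP Hs'.
  by rewrite /sdd_row gtr0_norm // -/s Hs' ltxx.
move=> j Hj.
have [Hji|Hji] := eqVneq j i; first by rewrite Hji.
have HD0' : \sum_(k < n | k != i) (A i k * m - A i k * v k 0) = 0.
  apply/eqP; rewrite -oppr_eq0 -sumrN.
  rewrite (eq_bigr (fun k => A i k * v k 0 - A i k * m)) -/D ?HD0 // => k _.
  by rewrite opprB.
have Hk : forall k, k != i -> 0 <= A i k * m - A i k * v k 0.
  move=> k Hk; rewrite subr_ge0; apply: ler_wnM2l; last exact: Hmin.
  by apply: HZ; rewrite eq_sym.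
move/eqP: (psumr_eq0P Hk HD0' Hji).
rewrite -mulrBr mulf_eq0 (negbTE Hj) /= subr_eq0 => /eqP ->.
by [].
Qed.

Lemma wcdd_monotone (R : realFieldType) (n : nat) (A : 'M[R]_n) :
  WCDD A -> Zmatrix A -> (forall i, 0 < A i i) -> monotone A.
Proof.
move=> [Hw Hc] HZ Hd v Hv i.
rewrite leNgt; apply/negP => Hneg.
have [k _ Hk] := @arg_minP _ _ _ i predT (fun k => v k 0) isT.
set m := v k 0 in Hk.
have Hmin : forall j, m <= v j 0 by move=> j; exact: Hk.
have Hm : m < 0 by apply: le_lt_trans (Hmin i) Hneg.
have Hpath : forall p x, v x 0 = m -> path (mx_edge A) x p -> v (last x p) 0 = m.
  elim=> [|y p IH] x Hx //= /andP [Hxy Hp].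
  apply: IH Hp.
  have [_ H] := @key_row _ _ A v x m HZ (Hd x) (Hw x) Hm Hx Hmin (Hv x).
  exact: H.
have [j /connectP [p Hp Hj] Hsdd] := Hc k.
have Hvj : v j 0 = m by rewrite Hj; apply: Hpath Hp.
have [H _] := @key_row _ _ A v j m HZ (Hd j) (Hw j) Hm Hvj Hmin (Hv j).
by rewrite Hsdd in H.
Qed.

Lemma M_diag (R : realFieldType) (n : nat) (A : 'M[R]_n) :
  Mmatrix A -> forall i, 0 < A i i.
Proof.
move=> [HZ Hmon] i; rewrite ltNge; apply/negP => Hii.
have H : forall k, 0 <= (A *m (\col_j (- (j == i)%:R))) k 0.
  move=> k; rewrite mxE (bigD1 i) //= big1 ?addr0; last first.
    by move=> j Hj; rewrite mxE (negbTE Hj) oppr0 mulr0.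
  rewrite mxE eqxx mulrN1 oppr_ge0.
  have [->|Hki] := eqVneq k i; first exact: Hii.
  exact: HZ.
have := Hmon _ H i; rewrite !mxE !eqxx /=; lra.
Qed.

Lemma M_wcdd (R : realFieldType) (n : nat) (A : 'M[R]_n) :
  WDD A -> Mmatrix A -> WCDD A.
Proof.
move=> Hw HM; split=> // r.
have Hd := @M_diag _ _ A HM; case: HM => HZ Hmon.
set S := connect (mx_edge A) r.
case: (boolP [exists j, S j && sdd_row A j]).
  by move=> /existsP [j /andP [H1 H2]]; exists j.
rewrite negb_exists => /forallP Hno.
have HnS : forall i j, S i -> ~~ S j -> A i j = 0.
  move=> i j Si Sj; apply/eqP; apply: contraNT Sj => Hij.
  by apply: connect_trans Si (connect1 _).
pose v : 'cV[R]_n := \col_k (- (S k)%:R).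
suff H : forall i, 0 <= (A *m v) i 0.
  by have := Hmon _ H r; rewrite mxE /S connect0 /=; lra.
move=> i; rewrite mxE.
have -> : \sum_j A i j * v j 0 = - \sum_(j | S j) A i j.
  rewrite (big_mkcond S) -sumrN; apply: eq_bigr => j _; rewrite mxE.
  by case: (S j); rewrite /= ?mulrN1 ?oppr0 ?mulr0 ?oppr0.
rewrite oppr_ge0.
case Si: (S i); last first.
  apply: sumr_le0 => j Sj; apply: HZ.
  by apply: contraTneq Sj => <-; rewrite Si.
rewrite (bigD1 i) //=.
have Hnsdd : ~~ sdd_row A i by have := Hno i; rewrite Si.
have Hwi := Hw i.
have Heq : \sum_(j < n | j != i) `|A i j| = A i i.
  apply/eqP; rewrite eq_le; apply/andP; split.
    by move: Hwi; rewrite /wdd_row gtr0_norm.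
  by move: Hnsdd; rewrite /sdd_row -leNgt gtr0_norm.
have -> : \sum_(j | S j && (j != i)) A i j = - \sum_(j < n | j != i) `|A i j|.
  rewrite -sumrN [RHS](bigID S) /= [X in _ = _ + X]big1 ?addr0.
    apply: eq_big => j; first by rewrite andbC.
    move=> /andP [Sj Hji]; rewrite ler0_norm ?opprK //.
    by apply: HZ; rewrite eq_sym.
  by move=> j /andP [Hji Sj]; rewrite (HnS i j Si Sj) normr0 oppr0.
by rewrite Heq subrr.
Qed.

Theorem theorem3p5 (R : realFieldType) (n : nat) (A : 'M[R]_n) :
  (WCDD A /\ Zmatrix A /\ (forall i, 0 < A i i)) <-> (WDD A /\ Mmatrix A).
Proof.
split.
  move=> [Hc [HZ Hd]]; split; first by case: Hc.
  by split=> //; apply: wcdd_monotone.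
move=> [Hw HM]; split; first exact: M_wcdd.
split; first by case: HM.
exact: M_diag.
Qed.
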